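(* Let $n=n(\theta)$ be positive integers with $n\to\infty$ and $\theta/n\to\infty$ as $\theta\to\infty$. Let $K_n(\theta)$ be a random variable with $P\{K_n(\theta)=k\}=|S_n^k|\theta^k/\theta_{(n)}$, $k=1,\dots,n$, where $\theta_{(n)}=\theta(\theta+1)\cdots(\theta+n-1)$ and $|S_n^k|$ is the coefficient of $\theta^k$ in $\theta_{(n)}$. Then, as $\theta\to\infty$, the family of laws of $K_n(\theta)/n$ satisfies an LDP on $[0,1]$ with speed $n\log\frac\theta n$ and rate function $I(x)=1-x$.
   Context: $K_n(\theta)$ is the number of distinct alleles in a sample of size $n$ from a $PD(\theta)$ population. An LDP with speed $a(\theta)$ uses normalization $a(\theta)^{-1}\log$ as $\theta\to\infty$. *)

(* Defs.v *)
From HB Require Import structures.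
From mathcomp Require Import all_boot all_order all_algebra.
From mathcomp Require Import all_classical all_reals all_analysis.
Set Implicit Arguments. Unset Strict Implicit. Unset Printing Implicit Defensive.
Import Order.TTheory GRing.Theory Num.Theory.
Import numFieldNormedType.Exports.
Local Open Scope classical_set_scope.
Local Open Scope ring_scope.

Definition pochhammer (R : pzRingType) (t : R) (n : nat) : R :=
  \prod_(i < n) (t + i%:R).

Definition stirling1 (R : nzRingType) (n k : nat) : R :=
  (\prod_(i < n) ('X + (i%:R)%:P) : {poly R})`_k.

(* P{ K_n(theta)/n \in A } where P{K_n(theta)=k} = |S_n^k| theta^k / theta_(n),
   k = 1..n. *)
Definition Kprob (R : realFieldType) (n : nat) (t : R) (A : set R) : R :=
  \sum_(1 <= k < n.+1)
     (if `[< A (k%:R / n%:R) >] then stirling1 R n k * t ^+ k / pochhammer t n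
      else 0).

(* Large deviation principle, as theta -> +oo, on the state space [0,1]
   (with its subspace topology from R), for the family of laws P t,
   with speed a and rate function I.  The limsup/liminf bounds
     limsup a(t)^-1 log P_t(F) <= - inf_F I    (F closed in [0,1])
     liminf a(t)^-1 log P_t(G) >= - inf_G I    (G open in [0,1])
   are written in their standard unfolded (epsilon) form, avoiding log 0. *)
Definition LDP01 (R : realType) (P : R -> set R -> R) (a : R -> R)
  (I : R -> R) : Prop :=
  [/\
      (forall x, 0 <= x <= 1 -> 0 <= I x),
      (forall c : R, closed [set x | 0 <= x <= 1 /\ I x <= c]),
      (forall (C : set R) (c : R), closed C ->
         (forall x, C x -> 0 <= x <= 1 -> c <= I x) ->
         forall eps : R, 0 < eps ->
         \forall t \near +oo%R, P t C <= expR (- ((c - eps) * a t)))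
    &
      (forall (O : set R) (x : R), open O -> O x -> 0 <= x <= 1 ->
         forall eps : R, 0 < eps ->
         \forall t \near +oo%R, expR (- ((I x + eps) * a t)) <= P t O)].

(* Main.v *)
Require Import Defs.
From HB Require Import structures.
From mathcomp Require Import all_boot all_order all_algebra.
From mathcomp Require Import all_classical all_reals all_analysis.
From mathcomp Require Import ring lra.
Import Order.TTheory GRing.Theory Num.Theory.
Import numFieldNormedType.Exports.
Local Open Scope classical_set_scope.
Local Open Scope ring_scope.

Section Stir.
Context {R : realType}.

Lemma stir_rec n k : stirling1 R n.+1 k =
  (if k == 0%N then 0 else stirling1 R n k.-1) + stirling1 R n k * n%:R.
Proof. by rewrite /stirling1 big_ord_recr /= mulrDr coefD coefMX coefMC. Qed.

Lemma stir0 k : stirling1 R 0 k = (k == 0%N)%:R.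
Proof. by rewrite /stirling1 big_ord0 coefE. Qed.

Lemma stir_ge0 n k : 0 <= stirling1 R n k.
Proof.
elim: n k => [|n IH] k; first by rewrite stir0; case: (k == 0%N).
rewrite stir_rec; apply: addr_ge0; last by apply: mulr_ge0.
by case: (k == 0%N).
Qed.

Lemma poch_rec (y : R) n : pochhammer y n.+1 = pochhammer y n * (y + n%:R).
Proof. by rewrite /pochhammer big_ord_recr. Qed.

Lemma stir_up n k (y : R) : 0 <= y -> stirling1 R n k * y ^+ k <= pochhammer y n.
Proof.
move=> y0; elim: n k => [|n IH] k.
  by rewrite stir0 /pochhammer big_ord0; case: k => [|k] /=; rewrite ?expr0 ?mulr1 ?mul0r.
rewrite stir_rec poch_rec mulrDl mulrDr; apply: lerD.
  case: k => [|k] /=; first by rewrite mul0r; apply: mulr_ge0 => //;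
    rewrite /pochhammer; apply: prodr_ge0 => i _; apply: addr_ge0.
  by rewrite exprS mulrCA [X in _ <= X]mulrC; apply: ler_wpM2l => //; exact: IH.
rewrite mulrAC; apply: ler_wpM2r => //; exact: IH.
Qed.

Lemma stir_diag n : 1 <= stirling1 R n n.
Proof.
elim: n => [|n IH]; first by rewrite stir0.
rewrite stir_rec /=; apply: (le_trans IH); rewrite lerDl; apply: mulr_ge0 => //; exact: stir_ge0.
Qed.

Lemma stir_low n k : (1 <= k <= n)%N ->
  (n.-1)`!%:R <= stirling1 R n k * (k.-1)`!%:R.
Proof.
elim: n k => [|n IH] k; first by case: k.
case/andP=> k1 kn; rewrite leq_eqVlt in kn; case/orP: kn => [/eqP -> | kn].
  rewrite /= ler_peMl //; exact: stir_diag.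
rewrite stir_rec /=.
have H := IH k; rewrite k1 /= -ltnS kn in H; have {}H := H isT.
case: n IH H kn => [|n] IH H kn; first by case: k k1 kn {H} => [|[]].
rewrite factS natrM /= mulrDl; apply: ler_wpDl.
  apply: mulr_ge0 => //; case: (k == 0%N) => //; exact: stir_ge0.
rewrite mulrAC mulrC.
by apply: ler_wpM2r.
Qed.

Lemma poch_lb (t : R) n : 0 <= t -> t ^+ n <= pochhammer t n.
Proof.
move=> t0; rewrite /pochhammer -[X in t ^+ X](card_ord n) -prodr_const.
by apply: ler_prod => i _; rewrite t0 /= -[X in X <= _]addr0 lerD2l.
Qed.

Lemma poch_ub (t : R) n : n%:R <= t -> pochhammer t n <= (2 * t) ^+ n.
Proof.
move=> nt; have t0 : 0 <= t by apply: le_trans nt.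
rewrite /pochhammer -[X in _ ^+ X](card_ord n) -prodr_const.
apply: ler_prod => i _; rewrite addr_ge0 //= mulr2n mulrDl mul1r lerD2l.
by apply: le_trans nt; rewrite ler_nat ltnW.
Qed.

Lemma term_upper n k (t : R) : (0 < n)%N -> (k <= n)%N -> n%:R <= t ->
  stirling1 R n k * t ^+ k / pochhammer t n <= 2 ^+ n / (t / n%:R) ^+ (n - k).
Proof.
move=> n0 kn nt.
set N : R := n%:R.
have N0 : 0 < N by rewrite ltr0n.
have t0 : 0 < t by apply: lt_le_trans nt.
have etn : t ^+ n = t ^+ k * t ^+ (n - k) by rewrite -exprD subnKC.
have eNn : N ^+ n = N ^+ k * N ^+ (n - k) by rewrite -exprD subnKC.
have c0 := stir_ge0 n k.
have hc : stirling1 R n k <= 2 ^+ n * N ^+ (n - k).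
  have := le_trans (stir_up n k N (ltW N0)) (poch_ub N n (lexx N)).
  rewrite exprMn eNn mulrCA [X in _ <= X]mulrC.
  by rewrite ler_pM2r // exprn_gt0.
have p0 : 0 < pochhammer t n by apply: lt_le_trans (@poch_lb t n (ltW t0)); rewrite exprn_gt0.
apply: (@le_trans _ _ (stirling1 R n k * t ^+ k / t ^+ n)).
  apply: ler_wpM2l; first by apply: mulr_ge0 => //; rewrite exprn_ge0 // ltW.
  rewrite lef_pV2 ?posrE ?exprn_gt0 //; exact: (@poch_lb t n (ltW t0)).
rewrite etn invfM mulrA -[X in X * _ <= _]mulrA mulfV ?mulr1; last by rewrite expf_neq0 // gt_eqF.
rewrite expr_div_n invf_div mulrA; apply: ler_wpM2r => //.
by rewrite invr_ge0 exprn_ge0 // ltW.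
Qed.

Lemma fact_le_pow m n : (m <= n)%N -> (m`! <= n ^ m)%N.
Proof.
elim: m => [|m IH] mn //; rewrite factS expnS leq_mul //; apply: IH; exact: ltnW.
Qed.

Lemma two_pow_le n : (2 : R) ^+ n <= expR (n%:R).
Proof.
rewrite -[X in expR X]mulr1 expRM_natl; apply: lerXn2r.
- by rewrite nnegrE.
- by rewrite nnegrE expR_ge0.
- by have := expR_ge1Dx (1 : R).
Qed.

Lemma term_lower n k (t : R) : (1 <= k <= n)%N -> n%:R <= t ->
  expR (- (2 * n%:R)) / (t / n%:R) ^+ (n - k) <= stirling1 R n k * t ^+ k / pochhammer t n.
Proof.
move=> /andP[k1 kn] nt.
have n0 : (0 < n)%N by apply: leq_trans kn.
set N : R := n%:R.
have N0 : 0 < N by rewrite ltr0n.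
have t0 : 0 < t by apply: lt_le_trans nt.
have etn : t ^+ n = t ^+ k * t ^+ (n - k) by rewrite -exprD subnKC.
have eNn : N ^+ n = N ^+ k * N ^+ (n - k) by rewrite -exprD subnKC.
have c0 := stir_ge0 n k.
have hfact : N ^+ n <= n`!%:R * expR N.
  clear -N0; rewrite mulrC -ler_pdivrMr ?ltr0n ?fact_gt0 //.
  case: n @N N0 => [|n'] N N0; first by rewrite ltxx in N0.
  apply: le_trans (expR_ge1Dxn n' (ltW N0)); rewrite lerDr //.
have hk : (k.-1)`!%:R <= N ^+ k.-1.
  rewrite /N -natrX ler_nat; apply: fact_le_pow; apply: leq_trans kn; exact: leq_pred.
have hc : N ^+ (n - k) <= stirling1 R n k * expR N.
  have h1 : n`!%:R <= stirling1 R n k * N ^+ k.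
    have h := @stir_low n k (ltac:(by rewrite k1 kn)).
    have h2 : (n.-1)`!%:R <= stirling1 R n k * N ^+ k.-1.
      apply: le_trans h _; apply: ler_wpM2l => //.
    rewrite -(prednK n0) factS natrM prednK // -(prednK k1) exprS prednK //.
    by rewrite mulrCA ler_wpM2l // ltW.
  have := le_trans hfact (ler_wpM2r (ltW (expR_gt0 N)) h1).
  by rewrite eNn mulrAC [X in _ <= X]mulrC ler_pM2l ?exprn_gt0.
have h2n := two_pow_le n.
have p0 : 0 < pochhammer t n by apply: lt_le_trans (@poch_lb t n (ltW t0)); rewrite exprn_gt0.
apply: (@le_trans _ _ (stirling1 R n k * t ^+ k / (2 * t) ^+ n)); last first.
  apply: ler_wpM2l; first by apply: mulr_ge0 => //; rewrite exprn_ge0 // ltW.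
  rewrite lef_pV2 ?posrE ?exprn_gt0 ?mulr_gt0 //; exact: poch_ub.
have tk0 : t ^+ k != 0 by rewrite expf_neq0 // gt_eqF.
have b0 : t ^+ (n - k) != 0 by rewrite expf_neq0 // gt_eqF.
have p20 : (2 : R) ^+ n != 0 by rewrite expf_neq0.
have -> : stirling1 R n k * t ^+ k / (2 * t) ^+ n =
   stirling1 R n k / 2 ^+ n / t ^+ (n - k).
  by rewrite exprMn etn; field; rewrite ?tk0 ?b0 ?p20.
rewrite expr_div_n invf_div mulrA; apply: ler_wpM2r.
  by rewrite invr_ge0 exprn_ge0 // ltW.
rewrite ler_pdivlMr ?exprn_gt0 //.
have -> : - (2 * N) = - N + - N by ring.
rewrite expRD.
have -> : expR (- N) * expR (- N) * N ^+ (n - k) * 2 ^+ n =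
  (expR (- N) * N ^+ (n - k)) * (expR (- N) * 2 ^+ n) by ring.
rewrite -[X in _ <= X]mulr1; apply: ler_pM.
- by apply: mulr_ge0; [rewrite ltW ?expR_gt0 | rewrite exprn_ge0 // ltW].
- by apply: mulr_ge0; [rewrite ltW ?expR_gt0 | rewrite exprn_ge0].
- by rewrite expRN mulrC -ler_pdivlMr ?invr_gt0 ?expR_gt0 // invrK.
- by rewrite expRN mulrC ler_pdivrMr ?expR_gt0 // mul1r.
Qed.

Lemma inv_pow_exp (r : R) m : 0 < r -> (r ^+ m)^-1 = expR (- (m%:R * ln r)).
Proof. by move=> r0; rewrite expRN expRM_natl lnK // posrE. Qed.

Lemma expR_ge1 (x : R) : 0 <= x -> 1 <= expR x.
Proof. by move=> x0; apply: le_trans (expR_ge1Dx x); rewrite lerDl. Qed.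

Lemma big_ratio (t N eps : R) : 0 < N -> 0 < eps -> expR (2 / eps) <= t / N ->
  [/\ 0 < t / N, N <= t & 2 <= eps * ln (t / N)].
Proof.
move=> N0 e0 h.
have r1 : 1 <= t / N by apply: le_trans h; apply: expR_ge1; rewrite divr_ge0 // ltW.
have r0 : 0 < t / N by apply: lt_le_trans r1.
split => //; first by rewrite ler_pdivlMr // mul1r in r1.
have := h; rewrite -ler_ln ?posrE ?expR_gt0 // expRK.
by rewrite ler_pdivrMr // mulrC.
Qed.
Lemma term_ge0 n k (t : R) : 0 < t -> 0 <= stirling1 R n k * t ^+ k / pochhammer t n.
Proof.
move=> t0; have p0 : 0 < pochhammer t n.
  by apply: lt_le_trans (@poch_lb t n (ltW t0)); rewrite exprn_gt0.
by rewrite divr_ge0 ?(ltW p0) // mulr_ge0 ?stir_ge0 // exprn_ge0 // ltW.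
Qed.
End Stir.

Theorem theorem4p3 (R : realType) (n : R -> nat)
  (n_pos : forall t : R, (0 < n t)%N)
  (n_to_oo : (fun t : R => (n t)%:R : R) @ +oo%R --> +oo%R)
  (ratio_to_oo : (fun t : R => t / (n t)%:R) @ +oo%R --> +oo%R) :
  LDP01 (fun (t : R) (A : set R) => Kprob (n t) t A)
        (fun t : R => (n t)%:R * ln (t / (n t)%:R))
        (fun x : R => 1 - x).
Proof.
move/cvgryPge: ratio_to_oo => hr.
move/cvgryPgt: n_to_oo => hn.
split.
- by move=> x /andP[_ x1]; rewrite subr_ge0.
- move=> c.
  have -> : [set x : R | 0 <= x <= 1 /\ 1 - x <= c] =
      [set x | 0 <= x] `&` [set x | x <= 1] `&` [set x | 1 - c <= x].
    apply/seteqP; split => x /=.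
      by move=> [/andP[-> ->]]; rewrite lerBlDr addrC -lerBlDr.
    by move=> [[-> ->]]; rewrite lerBlDr addrC -lerBlDr.
  by apply: closedI; [apply: closedI|]; [exact: closed_ge|exact: closed_le|exact: closed_ge].
- move=> C c _ hC eps e0.
  apply: filterS (hr (expR (2 / eps))) => t ht.
  set m := n t in ht *.
  have m0 : (0 < m)%N := n_pos t.
  have N0 : 0 < (m%:R : R) by rewrite ltr0n.
  have [r0 Nt eL] := big_ratio _ _ _ N0 e0 ht.
  set L := ln (t / m%:R) in eL *.
  have L0 : 0 <= L by rewrite -(pmulr_rge0 _ e0); apply: le_trans eL.
  rewrite /Kprob.
  apply: (le_trans (ler_sum_nat (G := fun _ => 2 ^+ m * expR (- (c * (m%:R * L)))) _)).
    move=> k /andP[k1 km]; rewrite ltnS in km.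
    case: asboolP => [Ck|_]; last by rewrite mulr_ge0 ?exprn_ge0 ?expR_ge0.
    apply: le_trans (term_upper _ _ _ m0 km Nt) _.
    apply: ler_wpM2l; first by rewrite exprn_ge0.
    rewrite inv_pow_exp // ler_expR lerN2 mulrA; apply: ler_wpM2r => //.
    have hc : c <= 1 - k%:R / m%:R.
      by apply: hC => //; rewrite divr_ge0 //= ler_pdivrMr // mul1r ler_nat.
    rewrite natrB // -ler_pdivlMr // mulrBl divff ?gt_eqF //.
  rewrite sumr_const_nat subSS subn0 -[_ *+ m]mulr_natl.
  have h2 := @two_pow_le R m.
  have hN : (m%:R : R) <= 2 ^+ m by rewrite -natrX ler_nat ltnW // ltn_expl.
  apply: (@le_trans _ _ (expR (m%:R + m%:R) * expR (- (c * (m%:R * L))))).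
    rewrite [X in X <= _]mulrA; apply: ler_wpM2r; first exact: expR_ge0.
    by rewrite expRD; apply: ler_pM => //; apply: le_trans h2.
  rewrite -expRD ler_expR.
  have : 2 * m%:R <= eps * L * m%:R by apply: ler_wpM2r => //; apply: ltW.
  nra.
- move=> O x Oo Ox /andP[x0 x1] eps e0.
  have [d d0 hd] : exists2 d : R, 0 < d & forall y, `|x - y| < d -> O y.
    have : nbhs x O by rewrite openE in Oo; exact: Oo.
    by move/nbhs_ballP => [e e1 H]; exists e => // y xy; apply: H.
  apply: filterS2 (hr (expR (2 / eps))) (hn d^-1) => t ht htn.
  set m := n t in ht htn *.
  have m0 : (0 < m)%N := n_pos t.
  have N0 : 0 < (m%:R : R) by rewrite ltr0n.
  have [r0 Nt eL] := big_ratio _ _ _ N0 e0 ht.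
  set L := ln (t / m%:R) in eL *.
  have L0 : 0 <= L by rewrite -(pmulr_rge0 _ e0); apply: le_trans eL.
  have t0 : 0 < t by apply: lt_le_trans Nt.
  set j := Num.Def.trunc (m%:R * x).
  have /andP[tl tu] := truncn_itv (mulr_ge0 (ltW N0) x0).
  rewrite -/j in tl tu.
  set k := minn m j.+1.
  have k1 : (1 <= k <= m)%N by rewrite leq_min m0 /= geq_minl.
  have kx : m%:R * x <= k%:R.
    rewrite /k; case: (leqP m j.+1) => h.
      by rewrite -[X in _ <= X]mulr1 ler_wpM2l // ltW.
    exact: (ltW tu).
  have kxu : k%:R <= m%:R * x + 1.
    apply: (@le_trans _ _ (j.+1)%:R); first by rewrite ler_nat geq_minr.
    by rewrite -natr1 lerD2r.
  have Ok : O (k%:R / m%:R).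
    apply: hd.
    have q1 : x <= k%:R / m%:R by rewrite ler_pdivlMr // mulrC.
    have q2 : k%:R / m%:R <= x + m%:R^-1.
      by rewrite ler_pdivrMr // mulrDl mulVf ?gt_eqF // mulrC.
    have q3 : m%:R^-1 < d.
      by rewrite -[d]invrK ltf_pV2 ?posrE ?invr_gt0.
    rewrite ltr_norml; apply/andP; split; lra.
  rewrite /Kprob (bigD1_seq k) ?iota_uniq //=; last by case/andP: k1 => a b; rewrite mem_index_iota a ltnS b.
  rewrite -[X in X <= _]addr0; apply: lerD; last first.
    apply: sumr_ge0 => i _; case: asboolP => // _.
    exact: term_ge0.
  case: asboolP => // _.
  apply: le_trans (term_lower _ _ _ k1 Nt).
  rewrite inv_pow_exp // -expRD ler_expR natrB; last by case/andP: k1.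
  have h1 : (m%:R - k%:R) * L <= (m%:R - m%:R * x) * L by apply: ler_wpM2r => //; lra.
  have h2 : 2 * m%:R <= eps * L * m%:R by apply: ler_wpM2r => //; apply: ltW.
  have -> : - ((1 - x + eps) * (m%:R * L)) = - (eps * L * m%:R) + - ((m%:R - m%:R * x) * L) by ring.
  by apply: lerD; rewrite lerN2.
Qed.
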